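(* Suppose the user paths $p_1,\dots,p_k$ are pairwise edge-disjoint. Then the set function $A\mapsto\Lambda(A,P)$ on $2^E$ is (1) monotone: $\Lambda(A,P)\le\Lambda(B,P)$ whenever $A\subseteq B\subseteq E$; and (2) submodular: for all $A\subseteq B\subseteq E$ and $e\in E$, $\Lambda(A\cup\{e\},P)-\Lambda(A,P)\ge\Lambda(B\cup\{e\},P)-\Lambda(B,P)$.
   Context: $G=(V,E)$ is a simple directed acyclic graph with capacities $C\in\mathbb{R}_{\ge0}^E$, and $\gamma$ is a budget with $0<\gamma\le\min_eC(e)$. User paths $P=\{p_1,\dots,p_k\}$ are directed paths in $G$ (viewed as edge sets) with initial flow values $\lambda_i\ge0$ such that $\sum_{i:e\in p_i}\lambda_i\le C(e)$ for all $e$. For $A\subseteq E$ let $\tilde C_A(e)=C(e)-\gamma\cdot\mathbf{1}_{\{e\in A\}}$, let $T(A,P)$ be the optimal value of: maximize $\sum_i\tilde\lambda_i$ s.t. $\sum_{i:e\in p_i}\tilde\lambda_i\le\tilde C_A(e)$ for all $e\in E$, $0\le\tilde\lambda_i\le\lambda_i$; and $\Lambda(A,P)=\sum_i\lambda_i-T(A,P)$. *)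

(* Defs.v *)
From HB Require Import structures.
From mathcomp Require Import all_boot all_order all_algebra.
From mathcomp Require Import boolp classical_sets reals.
Set Implicit Arguments. Unset Strict Implicit. Unset Printing Implicit Defensive.
Import Order.TTheory GRing.Theory Num.Theory.
Local Open Scope ring_scope.
Local Open Scope classical_set_scope.

Section Defs.
Variable V : finType.

Definition edges (g : rel V) : {set V * V} := [set e | g e.1 e.2].

(* simple: no self loops (parallel edges impossible with a relation);
   acyclic: no nonempty closed directed walk. *)
Definition simple_dag (g : rel V) : Prop :=
  irreflexive g /\
  forall (x : V) (s : seq V), path g x s -> last x s = x -> s = [::].

Definition is_dpath (g : rel V) (p : V * seq V) : Prop := path g p.1 p.2.

Definition path_edges (p : V * seq V) : {set V * V} :=
  [set e | e \in zip (p.1 :: p.2) p.2].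

Variable R : realType.

Definition Ctilde (C : V * V -> R) (gamma : R) (A : {set V * V}) (e : V * V) : R :=
  C e - gamma * (e \in A)%:R.

Variable k : nat.

Definition lp_feasible (g : rel V) (C : V * V -> R) (gamma : R)
  (P : 'I_k -> V * seq V) (lam : 'I_k -> R) (A : {set V * V})
  (lt : 'I_k -> R) : Prop :=
  (forall e, e \in edges g ->
     \sum_(i < k | e \in path_edges (P i)) lt i <= Ctilde C gamma A e) /\
  (forall i, 0 <= lt i <= lam i).

(* T(A,P): optimal value of the LP (supremum of the objective over the
   feasible region, which is nonempty and bounded, hence attained). *)
Definition T_opt (g : rel V) (C : V * V -> R) (gamma : R)
  (P : 'I_k -> V * seq V) (lam : 'I_k -> R) (A : {set V * V}) : R :=
  sup [set t : R | exists lt, lp_feasible g C gamma P lam A lt /\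
                              t = \sum_(i < k) lt i].

Definition Lambda (g : rel V) (C : V * V -> R) (gamma : R)
  (P : 'I_k -> V * seq V) (lam : 'I_k -> R) (A : {set V * V}) : R :=
  \sum_(i < k) lam i - T_opt g C gamma P lam A.

End Defs.

(* Main.v *)
Require Import Defs.
From HB Require Import structures.
From mathcomp Require Import all_boot all_order all_algebra.
From mathcomp Require Import boolp classical_sets reals.
From mathcomp Require Import lra.
Import Order.TTheory GRing.Theory Num.Theory.
Local Open Scope ring_scope.

Lemma pe_edges (V : finType) (g : rel V) (p : V * seq V) e :
  is_dpath g p -> e \in path_edges p -> e \in edges g.
Proof.
case: p => x s; rewrite /is_dpath /path_edges /= inE.
elim: s x => [|y s IH] x //= /andP[gxy ps].
rewrite inE => /orP[/eqP -> |]; first by rewrite inE.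
exact: IH.
Qed.

Lemma min_sub (R : realType) (a b y : R) : b <= a -> b - Order.min y b <= a - Order.min y a.
Proof.
move=> ba; rewrite /Order.min; case: ifP => h1; case: ifP => h2; 
 move: h1 h2; rewrite ?ltEnat; lra.
Qed.

Section Main.
Variables (V : finType) (R : realType) (g : rel V) (C : V * V -> R)
  (gamma : R) (k : nat) (P : 'I_k -> V * seq V) (lam : 'I_k -> R).
Hypotheses (Hg : 0 < gamma) (HCg : forall e, e \in edges g -> gamma <= C e)
  (Hp : forall i, is_dpath g (P i)) (Hlam : forall i, 0 <= lam i)
  (Hcap : forall e, e \in edges g ->
     \sum_(i < k | e \in path_edges (P i)) lam i <= C e)
  (Hdis : forall i j, i != j -> [disjoint path_edges (P i) & path_edges (P j)]).

Definition u (A : {set V * V}) (i : 'I_k) : R :=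
  \big[Order.min/lam i]_(f in path_edges (P i) :&: A) (C f - gamma).

Lemma sum_one (F : 'I_k -> R) e j : e \in path_edges (P j) ->
  \sum_(i < k | e \in path_edges (P i)) F i = F j.
Proof.
move=> ej; rewrite (bigD1 j) //= big1 ?addr0 // => i /andP[ei nij].
have := Hdis _ _ nij; rewrite disjoint_sym => /disjointFr /(_ ej).
by rewrite ei.
Qed.

Lemma sum_none (F : 'I_k -> R) e : (forall j, e \notin path_edges (P j)) ->
  \sum_(i < k | e \in path_edges (P i)) F i = 0.
Proof. by move=> h; rewrite big_pred0 // => i; apply/negbTE. Qed.

Lemma u_le_lam (A : {set V * V}) i : u A i <= lam i.
Proof. exact: bigmin_le_id. Qed.

Lemma u_ge0 (A : {set V * V}) i : 0 <= u A i.
Proof.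
apply/bigmin_geP; split => // f; rewrite inE => /andP[fp _].
rewrite subr_ge0; apply: HCg; exact: pe_edges (Hp i) fp.
Qed.

Lemma u_anti (A B : {set V * V}) i : A \subset B -> u B i <= u A i.
Proof.
move=> AB; apply/bigmin_geP; split; first exact: u_le_lam.
move=> f; rewrite inE => /andP[fp fA]; apply: bigmin_le_cond.
by rewrite inE fp (fintype.subsetP AB).
Qed.

Lemma u_add (A : {set V * V}) e i : u (e |: A) i =
  Order.min (if e \in path_edges (P i) then C e - gamma else lam i) (u A i).
Proof.
rewrite /u finset.setIUr bigminU -/(u A i).
set m := u A i. have hm : m <= lam i := u_le_lam A i.
have sw : forall x, Order.min (Order.min x (lam i)) m = Order.min x m.
  move=> x; by rewrite -minA (min_r hm).
case: ifP => ep.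
  have -> : path_edges (P i) :&: [set e] = [set e].
    apply/setP => x; rewrite finset.in_setI finset.in_set1; case: eqP => [->|]; by rewrite ?ep ?andbF.
  by rewrite bigmin_set1 sw.
have -> : path_edges (P i) :&: [set e] = finset.set0.
  apply/setP => x; rewrite finset.in_setI finset.in_set1 finset.in_set0; apply/negbTE/negP => /andP[xp /eqP xe].
  by rewrite -xe xp in ep.
by rewrite big_set0.
Qed.

Lemma T_eq (A : {set V * V}) : T_opt g C gamma P lam A = \sum_(i < k) u A i.
Proof.
have feas : lp_feasible g C gamma P lam A (u A).
  split.
    move=> e eg; case: (pselect (exists j, e \in path_edges (P j))) => [[j ej]|no].
      rewrite (@sum_one _ e j ej) /Ctilde; case eA: (e \in A).
        rewrite mulr1; apply: bigmin_le_cond; by rewrite finset.in_setI ej eA.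
      rewrite mulr0 subr0; apply: le_trans (u_le_lam _ _) _.
      rewrite -(@sum_one lam e j ej); exact: Hcap.
    rewrite sum_none; last first.
      by move=> j; apply/negP => ej; apply: no; exists j.
    rewrite /Ctilde; have := @HCg e eg; case: (e \in A); rewrite ?mulr1 ?mulr0 => h; [by rewrite subr_ge0 | by rewrite subr0 (le_trans (ltW Hg) h)].
  by move=> i; rewrite u_ge0 u_le_lam.
have ub : forall lt, lp_feasible g C gamma P lam A lt ->
    \sum_(i < k) lt i <= \sum_(i < k) u A i.
  move=> lt [h1 h2]; apply: ler_sum => i _; apply/bigmin_geP; split.
    by case/andP: (h2 i).
  move=> f; rewrite finset.in_setI => /andP[fp fA].
  have := h1 f (@pe_edges _ _ _ _ (Hp i) fp).
  by rewrite (@sum_one _ f i fp) /Ctilde fA mulr1.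
apply: le_anti; apply/andP; split.
  apply: ge_sup.
    by exists (\sum_(i < k) u A i); exists (u A).
  by move=> t [lt [hf ->]]; exact: ub.
apply: ub_le_sup.
  by exists (\sum_(i < k) u A i) => t [lt [hf ->]]; exact: ub.
by exists (u A).
Qed.
End Main.

Theorem lemma1 (V : finType) (R : realType) (g : rel V) (C : V * V -> R)
  (gamma : R) (k : nat) (P : 'I_k -> V * seq V) (lam : 'I_k -> R) :
  simple_dag g ->
  (forall e, e \in edges g -> 0 <= C e) ->
  0 < gamma ->
  (forall e, e \in edges g -> gamma <= C e) ->
  (forall i, is_dpath g (P i)) ->
  (forall i, 0 <= lam i) ->
  (forall e, e \in edges g ->
     \sum_(i < k | e \in path_edges (P i)) lam i <= C e) ->
  (* pairwise edge-disjoint user paths *)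
  (forall i j, i != j -> [disjoint path_edges (P i) & path_edges (P j)]) ->
  (* (1) monotone *)
  (forall A B : {set V * V}, A \subset B -> B \subset edges g ->
     Lambda g C gamma P lam A <= Lambda g C gamma P lam B) /\
  (* (2) submodular *)
  (forall (A B : {set V * V}) (e : V * V),
     A \subset B -> B \subset edges g -> e \in edges g ->
     Lambda g C gamma P lam (e |: A) - Lambda g C gamma P lam A >=
     Lambda g C gamma P lam (e |: B) - Lambda g C gamma P lam B).
Proof.
move=> dag C0 g0 HCg Hp Hlam Hcap Hdis.
pose U A i := @u V R C gamma k P lam A i.
have LE : forall A, Lambda g C gamma P lam A =
    \sum_(i < k) lam i - \sum_(i < k) U A i.
  by move=> A; rewrite /Lambda T_eq.
split.
  move=> A B AB _; rewrite !LE lerD2l lerN2; apply: ler_sum => i _.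
  exact: u_anti.
move=> A B e AB _ _; rewrite !LE.
have : \sum_(i < k) (U B i - U (e |: B) i) <= \sum_(i < k) (U A i - U (e |: A) i).
  apply: ler_sum => i _; rewrite /U !u_add //; apply: min_sub; exact: u_anti.
rewrite !sumrB => h; lra.
Qed.
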